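(* Let $(f,\varphi):(X_1,\kappa_1,A_1)\to(X_2,\kappa_2,A_2)$ be a sober monomorphism in $\mathbf{Sys}(L)$, i.e. a monomorphism such that for every $p\in Pt_L(A_1)$ and $y\in X_2$ with $p\circ\varphi=\ell_2(y)$ there exists $x\in X_1$ with $\ell_1(x)=p$ and $f(x)=y$. If $(X_2,\kappa_2,A_2)$ is sober, then $(X_1,\kappa_1,A_1)$ is sober.
   Context: Fix a variety $\mathbf{A}$ of algebras (full subcategory of the category of $\Omega$-algebras and homomorphisms closed under products, subalgebras and homomorphic images); standing assumptions of the paper: $\mathbf{A}$ has set-indexed coproducts and a free algebra over a singleton. Fix an $\mathbf{A}$-algebra $L$; $L^X$ is the power algebra. An affine system is $(X,\kappa,A)$ with $X$ a set, $A$ an algebra, $\kappa:A\to L^X$ a homomorphism; a morphism $(f,\varphi):(X_1,\kappa_1,A_1)\to(X_2,\kappa_2,A_2)$ is a map $f:X_1\to X_2$ with a homomorphism $\varphi:A_2\to A_1$ such that $\kappa_1(\varphi(a))(x)=\kappa_2(a)(f(x))$; composition $(g,\psi)\circ(f,\varphi)=(g\circ f,\varphi\circ\psi)$; this is $\mathbf{Sys}(L)$. For an algebra $A$, $Pt_L(A)$ is the set of homomorphisms $A\to L$; for a system $(X_i,\kappa_i,A_i)$, $\ell_i:X_i\to Pt_L(A_i)$ is $\ell_i(x)(a)=\kappa_i(a)(x)$; the system is sober if $\ell_i$ is bijective. *)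

(* Defs.v *)
Set Implicit Arguments.
Unset Strict Implicit.

Record signature := Signature { op_sym : Type; arity : op_sym -> Type }.

Section UA.
Variable S : signature.

Record algebra := Algebra {
  carrier :> Type;
  ops : forall o : op_sym S, (arity o -> carrier) -> carrier }.
Arguments ops a o _ : clear implicits.

Definition is_hom (A B : algebra) (h : A -> B) : Prop :=
  forall (o : op_sym S) (args : arity o -> A),
    h (ops A o args) = ops B o (fun i => h (args i)).

Definition prod_alg (I : Type) (F : I -> algebra) : algebra :=
  {| carrier := forall i : I, F i;
     ops := fun o args i => ops (F i) o (fun j => args j i) |}.

Definition power (L : algebra) (X : Type) : algebra := prod_alg (fun _ : X => L).

(* A variety: class of algebras closed under products, subalgebras
   (i.e. domains of injective homomorphisms into members) and homomorphic
   images (codomains of surjective homomorphisms from members). *)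
Definition is_variety (V : algebra -> Prop) : Prop :=
  (forall (I : Type) (F : I -> algebra), (forall i, V (F i)) -> V (prod_alg F)) /\
  (forall (A B : algebra) (h : B -> A), V A -> is_hom h ->
       (forall x y, h x = h y -> x = y) -> V B) /\
  (forall (A B : algebra) (h : A -> B), V A -> is_hom h ->
       (forall y, exists x, h x = y) -> V B).

Definition has_coproducts (V : algebra -> Prop) : Prop :=
  forall (I : Type) (F : I -> algebra), (forall i, V (F i)) ->
  exists (C : algebra) (inj : forall i, F i -> C),
    V C /\ (forall i, is_hom (inj i)) /\
    forall (B : algebra) (g : forall i, F i -> B), V B -> (forall i, is_hom (g i)) ->
      exists h : C -> B, is_hom h /\ (forall i x, h (inj i x) = g i x) /\
        forall h' : C -> B, is_hom h' -> (forall i x, h' (inj i x) = g i x) ->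
          forall c, h' c = h c.

Definition has_free_singleton (V : algebra -> Prop) : Prop :=
  exists (F : algebra) (gen : F), V F /\
    forall (B : algebra) (b : B), V B ->
      exists h : F -> B, is_hom h /\ h gen = b /\
        forall h' : F -> B, is_hom h' -> h' gen = b -> forall c, h' c = h c.

Section Sys.
Variable V : algebra -> Prop.
Variable L : algebra.

Record system := System {
  pts : Type;
  alg : algebra;
  alg_in : V alg;
  kappa : alg -> power L pts;
  kappa_hom : is_hom kappa }.
Arguments kappa : clear implicits.

Record sys_morph (T1 T2 : system) := SysMorph {
  mf : pts T1 -> pts T2;
  mphi : alg T2 -> alg T1;
  mphi_hom : is_hom mphi;
  mcompat : forall (a : alg T2) (x : pts T1), kappa T1 (mphi a) x = kappa T2 a (mf x) }.

Lemma comp_hom (A B C : algebra) (p : A -> B) (q : B -> C) :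
  is_hom p -> is_hom q -> is_hom (fun a => q (p a)).
Proof. intros hp hq o args. rewrite hp. apply hq. Qed.

Definition sys_comp (T1 T2 T3 : system) (m2 : sys_morph T2 T3) (m1 : sys_morph T1 T2)
  : sys_morph T1 T3.
Proof.
  refine (@SysMorph T1 T3 (fun x => mf m2 (mf m1 x)) (fun a => mphi m1 (mphi m2 a))
            (comp_hom (mphi_hom m2) (mphi_hom m1)) _).
  intros a x. rewrite (mcompat m1). apply (mcompat m2).
Defined.

Definition sys_mono (T1 T2 : system) (m : sys_morph T1 T2) : Prop :=
  forall (Z : system) (g h : sys_morph Z T1), sys_comp m g = sys_comp m h -> g = h.

Definition Pt (A : algebra) : Type := { p : A -> L | is_hom p }.

Lemma ell_hom (T : system) (x : pts T) : is_hom (fun a => kappa T a x).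
Proof.
  intros o args. cbn. rewrite (kappa_hom (s:=T)). reflexivity.
Qed.

Definition ell (T : system) (x : pts T) : Pt (alg T) :=
  exist _ (fun a => kappa T a x) (ell_hom x).

Definition sober (T : system) : Prop :=
  (forall x y : pts T, ell x = ell y -> x = y) /\
  (forall p : Pt (alg T), exists x : pts T, ell x = p).

Definition sober_mono (T1 T2 : system) (m : sys_morph T1 T2) : Prop :=
  sys_mono m /\
  forall (p : Pt (alg T1)) (y : pts T2),
    (fun a => proj1_sig p (mphi m a)) = proj1_sig (ell y) ->
    exists x : pts T1, ell x = p /\ mf m x = y.

End Sys.
End UA.

(* Main.v *)
Require Import Defs.
From Stdlib Require Import ProofIrrelevance FunctionalExtensionality.

Lemma sysmorph_eq (S : signature) (V : algebra S -> Prop) (L : algebra S)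
  (T1 T2 : system V L) (f1 f2 : pts T1 -> pts T2) (p1 p2 : alg T2 -> alg T1)
  h1 h2 c1 c2 :
  f1 = f2 -> p1 = p2 -> @SysMorph S V L T1 T2 f1 p1 h1 c1 = @SysMorph S V L T1 T2 f2 p2 h2 c2.
Proof.
  intros -> ->. f_equal; apply proof_irrelevance.
Qed.

Theorem proposition20 (S : signature) (V : algebra S -> Prop)
  (HV : is_variety V) (Hcop : has_coproducts V) (Hfree : has_free_singleton V)
  (L : algebra S) (HL : V L)
  (T1 T2 : system V L) (m : sys_morph T1 T2) :
  sober_mono m -> sober T2 -> sober T1.
Proof.
  intros [Hmono Hsm] [Hinj2 Hsurj2]. split.
  - intros x x' Hxx'.
    assert (Hf : mf m x = mf m x').
    { apply Hinj2. unfold ell.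
      assert (E : (fun a => @kappa _ _ _ T2 a (mf m x)) = (fun a => @kappa _ _ _ T2 a (mf m x'))).
      { apply functional_extensionality. intro a.
        rewrite <- !(mcompat m).
        apply (f_equal (@proj1_sig _ _)) in Hxx'. cbn in Hxx'.
        exact (f_equal (fun q => q (mphi m a)) Hxx'). }
      revert E. generalize (ell_hom (mf m x)) (ell_hom (mf m x')).
      intros i j E. revert i j. rewrite E. intros i j. f_equal. apply proof_irrelevance. }
    pose (kZ := fun (l : L) => (fun _ : unit => l) : power L unit).
    assert (kZh : is_hom (A:=L) (B:=power L unit) kZ) by (intros o args; reflexivity).
    pose (Z := @System S V L unit L HL kZ kZh).
    assert (Hp : proj1_sig (ell x) = proj1_sig (ell x')) by (rewrite Hxx'; reflexivity).
    assert (cg : forall (a : alg T1) (z : pts Z),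
               @kappa _ _ _ Z (proj1_sig (ell x) a) z = @kappa _ _ _ T1 a ((fun _ => x) z))
      by reflexivity.
    assert (ch : forall (a : alg T1) (z : pts Z),
               @kappa _ _ _ Z (proj1_sig (ell x) a) z = @kappa _ _ _ T1 a ((fun _ => x') z)).
    { intros a z. rewrite Hp. reflexivity. }
    pose (g := @SysMorph S V L Z T1 (fun _ => x) (proj1_sig (ell x)) (proj2_sig (ell x)) cg).
    pose (h := @SysMorph S V L Z T1 (fun _ => x') (proj1_sig (ell x)) (proj2_sig (ell x)) ch).
    assert (Egh : g = h).
    { apply Hmono. unfold sys_comp; cbn. apply sysmorph_eq.
      - apply functional_extensionality; intros; exact Hf.
      - reflexivity. }
    exact (f_equal (fun k : sys_morph Z T1 => mf k (tt : pts Z)) Egh).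
  - intros p.
    assert (hp : is_hom (fun a => proj1_sig p (mphi m a))).
    { apply comp_hom. apply mphi_hom. apply (proj2_sig p). }
    destruct (Hsurj2 (exist _ _ hp)) as [y Hy].
    destruct (Hsm p y) as [x [Hx _]].
    { rewrite Hy. reflexivity. }
    exists x. exact Hx.
Qed.
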